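(* For every tree $T=(V,E,w)$ whose cost function $w$ is down-monotonic and rounded, there exists an optimal extended strategy function for $T$ that is aligned.
   Context: $w$ is down-monotonic if there is a vertex $r$ such that $w(v)\le w(u)$ whenever $v$ lies on the path between $r$ and $u$; $w$ is rounded if each $w(u)$ equals $2^j$ for a nonnegative integer $j$. Intervals are of the form $[a,b)$ with integers $0\le a<b$, $|[a,b)|=b-a$; for $I=[a,b)$, $I'=[a',b')$ write $I>I'$ iff $a\ge b'$. An extended strategy function for $T$ is a map $f$ assigning to each vertex $u$ an interval $f(u)$ with $|f(u)|\ge w(u)$, such that for any distinct $v_1,v_2$ with $f(v_1)\cap f(v_2)\ne\emptyset$, the path between $v_1$ and $v_2$ contains a vertex $v_3$ with $f(v_3)>f(v_1)$ and $f(v_3)>f(v_2)$. It is optimal if $\sup\bigcup_{u\in V}f(u)$ is minimum among all extended strategy functions for $T$. A vertex $u$ is aligned if both endpoints of $f(u)$ are multiples of $w(u)$, and $f$ is aligned if every vertex is aligned. *)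

(* Defs.v *)
From mathcomp Require Import all_boot.
Set Implicit Arguments. Unset Strict Implicit. Unset Printing Implicit Defensive.

Definition simple_graph (V : finType) (e : rel V) :=
  irreflexive e /\ symmetric e.

Definition spath (V : finType) (e : rel V) (u v : V) (p : seq V) :=
  [/\ path e u p, last u p = v & uniq (u :: p)].

Definition connected_graph (V : finType) (e : rel V) :=
  forall u v : V, exists p, spath e u v p.

Definition acyclic_graph (V : finType) (e : rel V) :=
  forall c : seq V, uniq c -> 3 <= size c -> ~~ cycle e c.

Definition is_tree (V : finType) (e : rel V) :=
  [/\ simple_graph e, connected_graph e & acyclic_graph e].

Definition on_path (V : finType) (e : rel V) (u v x : V) :=
  exists p, spath e u v p /\ x \in u :: p.

Definition down_monotonic (V : finType) (e : rel V) (w : V -> nat) :=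
  exists r : V, forall u v : V, on_path e r u v -> w v <= w u.

Definition rounded (V : finType) (w : V -> nat) :=
  forall u, exists j : nat, w u = 2 ^ j.

(* An interval [a,b) is represented by the pair (a,b), with a < b. *)
Definition ilen (I : nat * nat) := I.2 - I.1.
Definition igt (I J : nat * nat) := J.2 <= I.1.
Definition imeet (I J : nat * nat) := maxn I.1 J.1 < minn I.2 J.2.

Definition ext_strategy (V : finType) (e : rel V) (w : V -> nat)
    (f : V -> nat * nat) :=
  (forall u, (f u).1 < (f u).2) /\
  (forall u, w u <= ilen (f u)) /\
  (forall v1 v2, v1 != v2 -> imeet (f v1) (f v2) ->
     exists v3, on_path e v1 v2 v3 /\ igt (f v3) (f v1) /\ igt (f v3) (f v2)).

(* sup of the union of the intervals [a,b) (as reals) = max of right ends *)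
Definition span (V : finType) (f : V -> nat * nat) := \max_(u : V) (f u).2.

Definition optimal_ext_strategy (V : finType) (e : rel V) (w : V -> nat)
    (f : V -> nat * nat) :=
  ext_strategy e w f /\
  forall g, ext_strategy e w g -> span f <= span g.

Definition aligned (V : finType) (w : V -> nat) (f : V -> nat * nat) :=
  forall u, (w u %| (f u).1) && (w u %| (f u).2).

(* Main.v *)
Require Import Defs.
From mathcomp Require Import all_boot zify.
From Stdlib Require Import Classical ClassicalEpsilon.
Set Implicit Arguments. Unset Strict Implicit. Unset Printing Implicit Defensive.


Lemma split_first (T : eqType) (P : pred T) (s : seq T) :
  has P s -> exists s1 z s2, [/\ s = s1 ++ z :: s2, P z & ~~ has P s1].
Proof.
elim: s => [|x s IH] //=.
case Px: (P x) => /=.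
  by move=> _; exists [::], x, s.
move=> /IH [s1 [z [s2 [-> Pz Hs1]]]].
by exists (x :: s1), z, s2; rewrite /= Px.
Qed.

Lemma mem_split (T : eqType) (x : T) (s : seq T) :
  x \in s -> exists s1 s2, s = s1 ++ x :: s2.
Proof. by case/splitPr => s1 s2; exists s1, s2. Qed.

Lemma spath_unique (V : finType) (e : rel V) (u v : V) (p q : seq V) :
  is_tree e -> spath e u v p -> spath e u v q -> p = q.
Proof.
move=> [[irr sym] _ acyc].
elim: p u q => [|a p IH] u [|b q] //.
- move=> [_ /= <- _] [_ lq uq].
  have : u \in b :: q by rewrite -[X in X \in _]lq /= mem_last.
  by move: uq => /= /andP[/negP].
- move=> [_ lp up] [_ /= lq _].
  have : u \in a :: p by rewrite lq -lp /= mem_last.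
  by move: up => /= /andP[/negP].
move=> [pp lp up] [pq lq uq].
case: (eqVneq a b) => [eab|ab]; first subst b.
  congr (_ :: _); apply: (IH a).
  - move: pp => /= /andP[_ pp']; rewrite /spath; split => //.
    by move: up => /= /andP[].
  - move: pq => /= /andP[_ pq']; rewrite /spath; split => //.
    by move: uq => /= /andP[].
exfalso.
have vs : v \in a :: p by rewrite -lp /= (mem_last a p).
have vt : v \in b :: q by rewrite -lq /= (mem_last b q).
move: pp lp up pq lq uq vs vt.
move Hs: (a :: p) => s; move Ht: (b :: q) => t.
move=> pp lp up pq lq uq vs vt.
have : has (mem t) s by apply/hasP; exists v.
move=> /split_first [s1 [z [s2 [Es zt Hs1]]]].
have [t1 [t2 Et]] := mem_split zt.
have ne : (s1 != [::]) || (t1 != [::]).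
  case: s1 Es {Hs1} => [|? ?] //=; case: t1 Et => [|? ?] //=.
  move=> Et' Es'; move: Hs Ht; rewrite Es' Et' => -[az _] [bz _].
  by rewrite az bz eqxx in ab.
suff [Hu Hsz Hc] : [/\ uniq (u :: s1 ++ z :: rev t1), 3 <= size (u :: s1 ++ z :: rev t1)
   & cycle e (u :: s1 ++ z :: rev t1)].
  by move: (acyc _ Hu Hsz); rewrite Hc.
split.
- move: up uq; rewrite Es Et /= !mem_cat !cat_uniq /= !inE !negb_or.
  rewrite rev_uniq mem_rev.
  move=> /and5P[/and3P[us1 uz _] us1' /andP[zs1 _] _ _].
  move=> /and5P[/and3P[ut1 _ _] ut1' /andP[zt1 _] _ _].
  rewrite us1 uz ut1 us1' ut1' zs1 mem_rev zt1 /= andbT.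
  apply/hasPn => x; rewrite mem_rev => xt1.
  apply/negP=> xs1; move/hasPn: Hs1 => /(_ x xs1).
  by rewrite /= Et mem_cat xt1.
- rewrite /= size_cat /= size_rev.
  by move: ne; rewrite -!size_eq0 -!lt0n ltnS addnS ltnS addn_gt0.
- rewrite /= rcons_cat /= cat_path.
  move: pp; rewrite Es cat_path => /andP[-> /= /andP[-> _]] /=.
  have := rev_path e u (rcons t1 z).
  rewrite last_rcons belast_rcons /= rev_cons => ->.
  rewrite (@eq_path _ _ e); last by move=> x y /=; rewrite sym.
  move: pq; rewrite Et cat_path rcons_path => /andP[-> /= /andP[-> _]].
  done.
Qed.


Lemma onpathP (V : finType) (e : rel V) u v x : is_tree e ->
  on_path e u v x <-> forall p, spath e u v p -> x \in u :: p.
Proof.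
move=> Ht; split.
  by move=> [p [sp xp]] q sq; rewrite -(spath_unique Ht sp sq).
move=> H; have [_ Hc _] := Ht; have [p sp] := Hc u v.
by exists p; split => //; apply: H.
Qed.

Lemma spath_rev (V : finType) (e : rel V) u v p : symmetric e ->
  spath e u v p -> spath e v u (rev (belast u p)) /\
  (forall x, (x \in v :: rev (belast u p)) = (x \in u :: p)).
Proof.
move=> sym [pp lp up].
have E : v :: rev (belast u p) = rev (u :: p).
  by rewrite [u :: p]lastI rev_rcons lp.
split; last by move=> x; rewrite E mem_rev.
split.
- rewrite -lp rev_path.
  have Ee : (fun z : V => e^~ z) =2 e by move=> x y /=; rewrite sym.
  by rewrite (eq_path Ee).
- by rewrite -(last_cons u) E rev_cons last_rcons.
- by rewrite E rev_uniq.
Qed.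

Lemma on_path_sym (V : finType) (e : rel V) u v x : is_tree e ->
  on_path e u v x -> on_path e v u x.
Proof.
move=> [[_ sym] _ _] [p [sp xp]].
have [sp' Hm] := spath_rev sym sp.
by exists (rev (belast u p)); split => //; rewrite Hm.
Qed.

Lemma on_path_l (V : finType) (e : rel V) u v : is_tree e -> on_path e u v u.
Proof.
move=> [_ Hc _]; have [p sp] := Hc u v.
by exists p; split => //; rewrite inE eqxx.
Qed.

Lemma on_path_r (V : finType) (e : rel V) u v : is_tree e -> on_path e u v v.
Proof.
move=> [_ Hc _]; have [p [pp lp up]] := Hc u v.
by exists p; split => //; rewrite -lp mem_last.
Qed.

Lemma on_path_uu (V : finType) (e : rel V) u x : is_tree e -> on_path e u u x -> x = u.
Proof.
move=> Ht /(onpathP _ _ _ Ht) /(_ [::]) H.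
have : x \in [:: u] by apply: H; split.
by rewrite inE => /eqP.
Qed.

Lemma on_path_via (V : finType) (e : rel V) u v c x : is_tree e ->
  on_path e u v x -> on_path e u c x \/ on_path e c v x.
Proof.
move=> Ht Hx; have [_ Hc _] := Ht.
have [p1 [pp1 lp1 up1]] := Hc u c.
have [p2 [pp2 lp2 up2]] := Hc c v.
have walk : path e u (p1 ++ p2) by rewrite cat_path pp1 lp1.
have Hl : last u (p1 ++ p2) = v by rewrite last_cat lp1.
move: Hl; case/shortenP: walk => p' pp' up' sub' lp'.
have : x \in u :: p' by move/(onpathP _ _ _ Ht): Hx; apply; split.
rewrite inE => /orP[/eqP->|xp'].
  by left; apply: on_path_l.
move/sub': xp'; rewrite mem_cat => /orP[xp|xp].
  by left; exists p1; split => //; rewrite inE xp orbT.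
by right; exists p2; split => //; rewrite inE xp orbT.
Qed.

Lemma on_path_meet (V : finType) (e : rel V) u v z x : is_tree e ->
  on_path e u v z -> on_path e u z x -> on_path e z v x -> x = z.
Proof.
move=> Ht [p [[pp lp up] zp]].
rewrite inE in zp; case/orP: zp => [/eqP ->|zp].
  by move=> /(on_path_uu Ht).
have [p1 [p2 Ep]] := mem_split zp.
have [pa pb] : path e u p1 /\ path e (last u p1) (z :: p2).
  by move: pp; rewrite Ep cat_path => /andP.
have [ua ub uc] : [/\ uniq (u :: p1), z \notin u :: p1 & uniq (z :: p2)].
  move: up; rewrite Ep -cat_cons cat_uniq => /and3P[-> /hasPn H ->].
  by split=> //; apply: H; rewrite inE eqxx.
have sp1 : spath e u z (rcons p1 z).
  split; first by rewrite rcons_path pa; move: pb => /= /andP[].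
    by rewrite last_rcons.
  by rewrite -rcons_cons rcons_uniq ub ua.
have sp2 : spath e z v p2.
  split; first by move: pb => /= /andP[].
    by move: lp; rewrite Ep last_cat.
  exact: uc.
move=> /(onpathP _ _ _ Ht)/(_ _ sp1) H1 /(onpathP _ _ _ Ht)/(_ _ sp2) H2.
move: H1 H2; rewrite -rcons_cons mem_rcons !inE => /orP[/eqP//|H1] /orP[/eqP//|H2].
move: up; rewrite Ep -cat_cons cat_uniq => /and3P[_ /hasPn/(_ x) H _].
by move: H; rewrite !inE H2 orbT H1 => /(_ isT).
Qed.

Lemma T1 (V : finType) (e : rel V) c u v x : is_tree e ->
  on_path e c u x -> ~ on_path e c v x -> on_path e u v x.
Proof.
move=> Ht H1 H2; case: (on_path_via v Ht H1) => // H.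
exact: on_path_sym.
Qed.

Lemma T2 (V : finType) (e : rel V) c u v x z : is_tree e ->
  on_path e c u x -> on_path e c v x -> on_path e u v z -> on_path e c z x.
Proof.
move=> Ht Hu Hv Hz; apply: NNPP => Hn.
have A := T1 Ht Hu Hn.
have B := on_path_sym Ht (T1 Ht Hv Hn).
have E := on_path_meet Ht Hz A B.
by apply: Hn; rewrite E; apply: on_path_r.
Qed.

Lemma T3 (V : finType) (e : rel V) c u v x z : is_tree e ->
  ~ on_path e c u x -> ~ on_path e c v x -> on_path e u v z -> ~ on_path e c z x.
Proof.
move=> Ht Hu Hv Hz Hx.
have A : on_path e u z x.
  case: (on_path_via u Ht Hx) => // H; exact: on_path_sym.
have B : on_path e z v x.
  case: (on_path_via v Ht Hx) => // H; exact: on_path_sym.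
have E := on_path_meet Ht Hz A B; subst x.
case: (on_path_via c Ht Hz) => H.
  by apply: Hu; apply: on_path_sym.
by apply: Hv.
Qed.


Definition pb (P : Prop) : bool := if excluded_middle_informative P then true else false.
Lemma pbP (P : Prop) : reflect P (pb P).
Proof. by rewrite /pb; case: excluded_middle_informative => h; constructor. Qed.

Definition good (V : finType) (e : rel V) (w : V -> nat) (X : {set V})
  (f : V -> nat * nat) :=
  (forall u, u \in X -> (f u).1 < (f u).2 /\ w u <= ilen (f u)) /\
  (forall v1 v2, v1 \in X -> v2 \in X -> v1 != v2 -> imeet (f v1) (f v2) ->
     exists v3, on_path e v1 v2 v3 /\
       (v3 \notin X \/ (igt (f v3) (f v1) /\ igt (f v3) (f v2)))).

Definition spanX (V : finType) (X : {set V}) (f : V -> nat * nat) :=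
  \max_(u in X) (f u).2.

Definition alignedX (V : finType) (w : V -> nat) (X : {set V}) (f : V -> nat * nat) :=
  forall u, u \in X -> (w u %| (f u).1) && (w u %| (f u).2).

Definition convexX (V : finType) (e : rel V) (X : {set V}) :=
  forall u v z, u \in X -> v \in X -> on_path e u v z -> z \in X.

Lemma spanX_le (V : finType) (X : {set V}) f k :
  (forall u, u \in X -> (f u).2 <= k) -> spanX X f <= k.
Proof. by move=> H; apply/bigmax_leqP. Qed.

Lemma le_spanX (V : finType) (X : {set V}) f u :
  u \in X -> (f u).2 <= spanX X f.
Proof. by move=> uX; rewrite /spanX; apply: (@leq_bigmax_cond _ (fun u => u \in X) (fun u => (f u).2) u uX). Qed.

Lemma spanX_sub (V : finType) (X Y : {set V}) f :
  Y \subset X -> spanX Y f <= spanX X f.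
Proof.
move=> /subsetP sub; apply: spanX_le => u uY; apply: le_spanX; exact: sub.
Qed.

Lemma dvd_spanX (V : finType) (X : {set V}) f d :
  (forall u, u \in X -> d %| (f u).2) -> d %| spanX X f.
Proof.
move=> H; rewrite /spanX; apply: (big_ind (fun k => d %| k)) => //.
by move=> a b da db; rewrite /maxn; case: ifP.
Qed.

Lemma nomeet (I J : nat * nat) : I.2 <= J.1 -> ~~ imeet I J /\ ~~ imeet J I.
Proof. rewrite /imeet => H; split; apply/negP; lia. Qed.

Lemma good_sub (V : finType) (e : rel V) w (X Y : {set V}) f :
  Y \subset X -> good e w X f -> good e w Y f.
Proof.
move=> /subsetP sub [H1 H2]; split=> [u uY|v1 v2 v1Y v2Y ne me].
  by apply: H1; apply: sub.
have [v3 [p3 [n3|l3]]] := H2 v1 v2 (sub _ v1Y) (sub _ v2Y) ne me.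
  by exists v3; split => //; left; apply/negP => /sub; apply/negP.
by exists v3; split => //; right.
Qed.

Lemma good_ext (V : finType) (e : rel V) w (X : {set V}) f g :
  (forall u, u \in X -> g u = f u) -> good e w X f -> good e w X g.
Proof.
move=> E [H1 H2]; split=> [u uX|v1 v2 v1X v2X ne].
  by rewrite E //; apply: H1.
rewrite (E _ v1X) (E _ v2X) => me.
have [v3 [p3 [n3|l3]]] := H2 v1 v2 v1X v2X ne me.
  by exists v3; split => //; left.
case: (boolP (v3 \in X)) => v3X.
  by exists v3; split => //; right; rewrite E.
by exists v3; split => //; left.
Qed.

Lemma add_top (V : finType) (e : rel V) w (Y : {set V}) x g :
  good e w Y g -> x \notin Y -> (g x).1 < (g x).2 -> w x <= ilen (g x) ->
  (forall u, u \in Y -> (g u).2 <= (g x).1) -> good e w (x |: Y) g.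
Proof.
move=> [H1 H2] xY lt le bel; split=> [u|v1 v2].
  by rewrite !inE => /orP[/eqP->|uY]; [split|apply: H1].
rewrite !inE => /orP[/eqP->|v1Y] /orP[/eqP->|v2Y] ne me.
- by rewrite eqxx in ne.
- by have [_ /negP] := nomeet (bel _ v2Y).
- by have [/negP] := nomeet (bel _ v1Y).
have [v3 [p3 [n3|l3]]] := H2 v1 v2 v1Y v2Y ne me.
  case: (eqVneq v3 x) => [E|nx].
    by exists v3; split => //; right; rewrite E /igt; split; apply: bel.
  by exists v3; split => //; left; rewrite !inE negb_or nx.
by exists v3; split => //; right.
Qed.

Lemma glue_sub (V : finType) (e : rel V) w (c x : V) (X1 X2 : {set V}) g1 g2 g :
  is_tree e ->
  (forall u, u \in X1 -> on_path e c u x) ->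
  (forall u, u \in X2 -> ~ on_path e c u x) -> x \notin X1 ->
  (forall u, u \in X1 -> g u = g1 u) -> (forall u, u \in X2 -> g u = g2 u) ->
  good e w X1 g1 -> good e w X2 g2 -> good e w (X1 :|: X2) g.
Proof.
move=> Ht S1 S2 xX1 E1 E2 [A1 B1] [A2 B2].
have xX2 : x \notin X2 by apply/negP => /S2; apply; apply: on_path_r.
have n12 : forall u, u \in X1 -> u \notin X2.
  by move=> u /S1 h; apply/negP => /S2.
split=> [u|v1 v2].
  by rewrite inE => /orP[uX|uX]; [rewrite E1 //; apply: A1|rewrite E2 //; apply: A2].
have cross : forall v1 v2, v1 \in X1 -> v2 \in X2 ->
    exists v3, on_path e v1 v2 v3 /\ v3 \notin X1 :|: X2.
  move=> a b aX bX; exists x; split; last by rewrite inE negb_or xX1.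
  by apply: (T1 Ht (S1 _ aX)); apply: S2.
move=> v1X v2X ne.
case: (boolP (v1 \in X1)) => v1X1; case: (boolP (v2 \in X1)) => v2X1.
- rewrite (E1 _ v1X1) (E1 _ v2X1) => me.
  have [v3 [p3 [n3|l3]]] := B1 v1 v2 v1X1 v2X1 ne me.
    exists v3; split => //; left; rewrite inE negb_or n3 /=.
    apply/negP => /S2; apply; exact: (T2 Ht (S1 _ v1X1) (S1 _ v2X1) p3).
  case: (boolP (v3 \in X1)) => v3X.
    by exists v3; split => //; right; rewrite E1.
  exists v3; split => //; left; rewrite inE negb_or v3X /=.
  apply/negP => /S2; apply; exact: (T2 Ht (S1 _ v1X1) (S1 _ v2X1) p3).
- have v2X2 : v2 \in X2 by move: v2X; rewrite inE (negbTE v2X1).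
  by move=> _; have [v3 [? ?]] := cross _ _ v1X1 v2X2; exists v3; split => //; left.
- have v1X2 : v1 \in X2 by move: v1X; rewrite inE (negbTE v1X1).
  move=> _; have [v3 [? ?]] := cross _ _ v2X1 v1X2.
  by exists v3; split; [apply: on_path_sym|left].
have v1X2 : v1 \in X2 by move: v1X; rewrite inE (negbTE v1X1).
have v2X2 : v2 \in X2 by move: v2X; rewrite inE (negbTE v2X1).
rewrite (E2 _ v1X2) (E2 _ v2X2) => me.
have N3 : forall v3, on_path e v1 v2 v3 -> v3 \notin X1.
  move=> v3 p3; apply/negP => /S1 h.
  by apply: (T3 Ht (S2 _ v1X2) (S2 _ v2X2) p3).
have [v3 [p3 [n3|l3]]] := B2 v1 v2 v1X2 v2X2 ne me.
  by exists v3; split => //; left; rewrite inE negb_or n3 N3.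
case: (boolP (v3 \in X2)) => v3X.
  by exists v3; split => //; right; rewrite E2.
by exists v3; split => //; left; rewrite inE negb_or v3X N3.
Qed.

Lemma top_below (V : finType) (e : rel V) w (X : {set V}) h y :
  convexX e X -> good e w X h -> y \in X -> spanX X h <= (h y).2 ->
  forall u, u \in X -> u != y -> (h u).2 <= (h y).1.
Proof.
move=> Hc [H1 H2] yX sp u uX ne; rewrite leqNgt; apply/negP => lt.
have [a1 _] := H1 u uX; have [a2 _] := H1 y yX.
have bu := le_spanX h uX.
have me : imeet (h u) (h y) by rewrite /imeet; lia.
have [v3 [p3 [n3|[l3 l3']]]] := H2 u y uX yX ne me.
  by rewrite (Hc _ _ _ uX yX p3) in n3.
have v3X := Hc _ _ _ uX yX p3.
have [a3 _] := H1 v3 v3X; have b3 := le_spanX h v3X.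
move: l3'; rewrite /igt; lia.
Qed.

Lemma pow2_le_dvd a b i j : a = 2 ^ i -> b = 2 ^ j -> a <= b -> a %| b.
Proof.
move=> -> -> H; apply: dvdn_exp2l; by rewrite -(leq_exp2l _ _ (isT : 1 < 2)).
Qed.

Lemma pow2_split i j M : 2 ^ i %| M -> ~~ (2 ^ j %| M) -> 2 ^ i %| 2 ^ j /\ 2 ^ i < 2 ^ j.
Proof.
move=> Hi Hj.
have ij : i < j.
  rewrite ltnNge; apply/negP => ji; move: Hj; rewrite (dvdn_trans (dvdn_exp2l 2 ji) Hi) //.
split; first by apply: dvdn_exp2l; apply: ltnW.
by rewrite ltn_exp2l.
Qed.

Lemma A1 a b k : k <= b - a -> a < b -> a + k <= b. Proof. lia. Qed.
Lemma A2 n d : 0 < d -> n < n + d. Proof. lia. Qed.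
Lemma A3 n d : d <= n + d - n. Proof. lia. Qed.
Lemma A4 M wy d : 0 < wy -> wy <= M -> M - wy + d < M + d. Proof. lia. Qed.
Lemma A5 M wy d : wy <= M -> wy <= M + d - (M - wy + d). Proof. lia. Qed.
Lemma A6 a b c : a + b <= c -> a <= c - b. Proof. lia. Qed.
Lemma A7 P M d wy : P <= M -> d %| P -> ~~ (d %| M) -> wy %| M -> wy %| d -> 0 < d ->
  P <= M - wy.
Proof.
move=> PM dP dM wM wd d0.
have Pm : P <= M - M %% d.
  have EP := divn_eq P d.
  have EM := divn_eq M d.
  have P0 : P %% d = 0 by apply/eqP.
  have qQ : P %/ d * d <= M %/ d * d by rewrite leq_mul2r leq_div2r ?orbT.
  lia.
have wm : wy <= M %% d.
  apply: dvdn_leq.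
    by rewrite lt0n; move: dM; rewrite /dvdn.
  have -> : M %% d = M - M %/ d * d by have := divn_eq M d; lia.
  by apply: dvdn_sub => //; apply: dvdn_mull.
have := ltn_pmod M d0; lia.
Qed.


Lemma claim (V : finType) (e : rel V) (w : V -> nat) (r : V) :
  is_tree e -> (forall u v, on_path e r u v -> w v <= w u) -> rounded w ->
  forall n (X : {set V}) f, #|X| <= n -> good e w X f ->
  exists g, [/\ good e w X g, alignedX w X g & spanX X g <= spanX X f].
Proof.
move=> Ht Hdm Hr; elim=> [|n IH] X f HX Hf.
  exists f; split => //.
  by move: HX; rewrite leqn0 cards_eq0 => /eqP -> u; rewrite inE.
have IHs : forall (Y : {set V}) g, #|Y| < #|X| -> good e w Y g ->
    exists g', [/\ good e w Y g', alignedX w Y g' & spanX Y g' <= spanX Y g].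
  by move=> Y g HY; apply: IH; rewrite -ltnS (leq_trans HY HX).
case: (classic (convexX e X)) => Hcv; last first.
  have [u [v [z [uX vX pz zX]]]] : exists u v z,
      [/\ u \in X, v \in X, on_path e u v z & z \notin X].
    apply: NNPP => H; apply: Hcv => u v z uX vX pz; apply: NNPP => zX.
    by apply: H; exists u, v, z; split => //; apply/negP.
  set S := [set y | pb (on_path e u y z)].
  have inS y : (y \in S) = pb (on_path e u y z) by rewrite inE.
  have uS : u \notin S.
    rewrite inS; apply/pbP => /(on_path_uu Ht) zu.
    by rewrite zu uX in zX.
  have vS : v \in S by rewrite inS; apply/pbP.
  have c1 : #|X :&: S| < #|X|.
    apply: proper_card; apply/properP; split; first exact: subsetIl.
    by exists u => //; rewrite inE (negbTE uS) andbF.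
  have c2 : #|X :\: S| < #|X|.
    apply: proper_card; apply/properP; split; first exact: subsetDl.
    by exists v => //; rewrite inE vS.
  have [g1 [g1g g1a g1s]] := IHs _ f c1 (good_sub (subsetIl X S) Hf).
  have [g2 [g2g g2a g2s]] := IHs _ f c2 (good_sub (subsetDl X S) Hf).
  exists (fun y => if y \in S then g1 y else g2 y); split.
  - rewrite -{1}(setID X S).
    apply: (@glue_sub _ _ _ u z _ _ g1 g2) => //.
    + by move=> y; rewrite inE inS => /andP[_ /pbP].
    + by move=> y; rewrite inE inS => /andP[/pbP].
    + by rewrite inE (negbTE zX).
    + by move=> y; rewrite inE => /andP[_ ->].
    + by move=> y; rewrite inE => /andP[/negbTE ->].
  - move=> y yX; case: (boolP (y \in S)) => yS.
      by apply: g1a; rewrite inE yX yS.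
    by apply: g2a; rewrite inE yX yS.
  - apply: spanX_le => y yX; case: (boolP (y \in S)) => yS.
      have yS' : y \in X :&: S by rewrite inE yX yS.
      apply: (leq_trans (le_spanX _ yS')); apply: (leq_trans g1s).
      exact: spanX_sub (subsetIl X S).
    have yS' : y \in X :\: S by rewrite inE yX yS.
    apply: (leq_trans (le_spanX _ yS')); apply: (leq_trans g2s).
    exact: spanX_sub (subsetDl X S).
case: (set_0Vmem X) => [X0|[x0 x0X]].
  by exists f; split => // u; rewrite X0 inE.
have cX : 0 < #|X| by rewrite card_gt0; apply/set0Pn; exists x0.
have [x xX Hxm] := eq_bigmax_cond (fun u => (f u).2) cX.
have Hsx : spanX X f = (f x).2 by [].
have Hbel := top_below Hcv Hf xX (eq_leq Hsx).
have [Hf1 Hf2] := Hf.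
have [ax lx] := Hf1 x xX.
have Hlen : (f x).1 + w x <= (f x).2 by apply: A1.
have [j wxj] := Hr x.
set S := [set y | pb (on_path e r y x)].
have inS y : (y \in S) = pb (on_path e r y x) by rewrite inE.
have xS : x \in S by rewrite inS; apply/pbP; apply: on_path_r.
set A := (X :&: S) :\ x.
set B := X :\: S.
have inA y : (y \in A) = [&& y != x, y \in X & y \in S] by rewrite !inE.
have inB y : (y \in B) = (y \notin S) && (y \in X) by rewrite !inE.
have cA : #|A| < #|X|.
  apply: proper_card; apply/properP; split.
    by apply/subsetP => y; rewrite inA => /and3P[].
  by exists x => //; rewrite inA eqxx.
have cB : #|B| < #|X|.
  apply: proper_card; apply/properP; split; first exact: subsetDl.
  by exists x => //; rewrite inB xS.
have AX : A \subset X by apply/subsetP => y; rewrite inA => /and3P[].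
have BX : B \subset X by exact: subsetDl.
have [gA [gAg gAa gAs]] := IHs _ f cA (good_sub AX Hf).
have [gB [gBg gBa gBs]] := IHs _ f cB (good_sub BX Hf).
set P := spanX A gA.
set M := spanX B gB.
have HP : P <= (f x).1.
  apply: (leq_trans gAs); apply: spanX_le => y; rewrite inA => /and3P[yx yX _].
  exact: Hbel.
have HM : M <= (f x).1.
  apply: (leq_trans gBs); apply: spanX_le => y; rewrite inB => /andP[yS yX].
  apply: Hbel => //; apply/eqP => yx; by rewrite yx xS in yS.
have HdP : 2 ^ j %| P.
  apply: dvd_spanX => y yA.
  have [yx yX yS] : [/\ y != x, y \in X & y \in S] by move: yA; rewrite inA => /and3P.
  have [k wyk] := Hr y.
  have le : w x <= w y by apply: Hdm; move: yS; rewrite inS => /pbP.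
  rewrite -wxj; apply: (dvdn_trans (pow2_le_dvd wxj wyk le)).
  by move: (gAa y yA) => /andP[].
have Aon : forall y, y \in A -> on_path e r y x.
  by move=> y; rewrite inA inS => /and3P[_ _ /pbP].
have Bon : forall y, y \in B -> ~ on_path e r y x.
  by move=> y; rewrite inB inS => /andP[/pbP].
have xA : x \notin A by rewrite inA eqxx.
have EP : spanX A gA = P by [].
have EM : spanX B gB = M by [].
clearbody P M.
have wx0 : 0 < 2 ^ j by rewrite expn_gt0.
case: (boolP (2 ^ j %| maxn P M)) => Hdiv.
  set d := 2 ^ j in wxj Hdiv wx0 *; clearbody d.
  set N := maxn P M.
  pose g := fun y => if y == x then (N, N + d) else if y \in S then gA y else gB y.
  have gAB : good e w (A :|: B) g.
    apply: (@glue_sub _ _ _ r x _ _ gA gB) => // y.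
      by rewrite inA => /and3P[/negbTE yx _ yS]; rewrite /g yx yS.
    rewrite inB => /andP[yS _]; rewrite /g (negbTE yS).
    by case: eqP => // yx; rewrite yx xS in yS.
  have gX : good e w (x |: (A :|: B)) g.
    apply: add_top => //.
    - by rewrite inE negb_or xA inB xS.
    - by rewrite /g eqxx /=; apply: A2.
    - by rewrite /g eqxx /ilen /= wxj; apply: A3.
    - move=> y; rewrite inE => /orP[yA|yB].
        have [yx _ yS] : [/\ y != x, y \in X & y \in S] by move: yA; rewrite inA => /and3P.
        rewrite /g (negbTE yx) yS eqxx /=.
        by apply: (leq_trans (le_spanX gA yA)); rewrite EP /N; exact: leq_maxl.
      have [yS yX] : y \notin S /\ y \in X by move: yB; rewrite inB => /andP.
      have yx : y != x by apply/eqP => yx; rewrite yx xS in yS.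
      rewrite /g (negbTE yx) (negbTE yS) eqxx /=.
      by apply: (leq_trans (le_spanX gB yB)); rewrite EM /N; exact: leq_maxr.
  have EX : x |: (A :|: B) = X.
    apply/setP => y; rewrite !inE.
    case: (eqVneq y x) => [->|yx] /=; first by rewrite xX.
    by case: (pb _); rewrite ?andbT ?andbF ?orbF.
  exists g; split.
  - by rewrite -EX.
  - move=> y yX; rewrite /g; case: (eqVneq y x) => [->|yx].
      by rewrite /= wxj (dvdn_addl _ (dvdnn _)) andbb.
    case: (boolP (y \in S)) => yS.
      by apply: gAa; rewrite inA yx yX yS.
    by apply: gBa; rewrite inB yX yS.
  - apply: spanX_le => y yX; rewrite /g; case: (eqVneq y x) => [_|yx] /=.
      by rewrite Hsx -wxj; apply: leq_trans Hlen; rewrite leq_add2r /N geq_max HP HM.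
    case: (boolP (y \in S)) => yS.
      have yA : y \in A by rewrite inA yx yX yS.
      apply: (leq_trans (le_spanX gA yA)); rewrite Hsx EP.
      by apply: leq_trans HP _; apply: leq_trans Hlen; exact: leq_addr.
    have yB : y \in B by rewrite inB yX yS.
    apply: (leq_trans (le_spanX gB yB)); rewrite Hsx EM.
    by apply: leq_trans HM _; apply: leq_trans Hlen; exact: leq_addr.
have PM : P <= M.
  rewrite leqNgt; apply/negP => lt.
  by move: Hdiv; rewrite (maxn_idPl (ltnW lt)) HdP.
have HdM : ~~ (2 ^ j %| M) by move: Hdiv; rewrite (maxn_idPr PM).
have cB0 : 0 < #|B|.
  rewrite card_gt0; apply/negP => /eqP B0.
  by move: HdM; rewrite -EM B0 /spanX big_set0 dvdn0.
have [y yB Hym] := eq_bigmax_cond (fun u => (gB u).2) cB0.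
have HMy : M = (gB y).2 by rewrite -EM.
have [yS yX] : y \notin S /\ y \in X by move: yB; rewrite inB => /andP.
have yx : y != x by apply/eqP => yx; rewrite yx xS in yS.
have Bcv : convexX e B.
  move=> u v z uB vB p.
  rewrite inB (Hcv _ _ _ (subsetP BX _ uB) (subsetP BX _ vB) p) andbT inS.
  by apply/negP => /pbP; apply: (T3 Ht (Bon _ uB) (Bon _ vB) p).
have Hbel2 := top_below Bcv gBg yB (eq_leq (etrans EM HMy)).
have [i wyi] := Hr y.
have wyM : w y %| M by rewrite HMy; move: (gBa y yB) => /andP[].
have [wyj wyltj] : w y %| 2 ^ j /\ w y < 2 ^ j.
  by rewrite wyi; apply: (pow2_split _ HdM); rewrite -wyi.
have [gBy1 gBy2] := (proj1 gBg) y yB.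
have Hly : (gB y).1 + w y <= M by rewrite HMy; apply: A1.
set K := M - w y.
have wypos : 0 < w y by rewrite wyi expn_gt0.
have PK : P <= K by apply: A7 wx0.
have wyM' : w y <= M by apply: leq_trans Hly; apply: leq_addl.
have Hy1 : (gB y).1 <= K by apply: A6.
have KM : K <= M by apply: leq_subr.
pose h := fun u => if u == x then (K, K + 2 ^ j) else if u \in S then gA u else gB u.
have Bym : forall u, u \in B :\ y -> u \in B /\ u != y.
  by move=> u; rewrite !inE => /andP[-> ->].
have gY0 : good e w (A :|: (B :\ y)) h.
  apply: (@glue_sub _ _ _ r x _ _ gA gB) => //.
  - by move=> u /Bym[/Bon].
  - by move=> u; rewrite inA => /and3P[/negbTE ux _ uS]; rewrite /h ux uS.
  - move=> u /Bym[uB _]; move: uB; rewrite inB => /andP[uS _]; rewrite /h (negbTE uS).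
    by case: eqP => // ux; rewrite ux xS in uS.
  - exact: good_sub (subD1set B y) gBg.
have xY0 : x \notin A :|: (B :\ y).
  by apply/negP; rewrite inE => /orP[xA0|/Bym[xB _]]; [rewrite xA0 in xA|rewrite inB xS in xB].
have gY' : good e w (x |: (A :|: (B :\ y))) h.
  apply: add_top => //.
  - by rewrite /h eqxx /=; apply: A2.
  - by rewrite /h eqxx /ilen /= wxj; apply: A3.
  move=> u; rewrite inE => /orP[uA|uB'].
    have [ux _ uS] : [/\ u != x, u \in X & u \in S] by move: uA; rewrite inA => /and3P.
    rewrite /h (negbTE ux) uS eqxx /=.
    by apply: (leq_trans (le_spanX gA uA)); rewrite EP //; apply: leq_trans PK (leq_addr _ _).
  have [uB uy] := Bym _ uB'.
  have [uS uX] : u \notin S /\ u \in X by move: uB; rewrite inB => /andP.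
  have ux : u != x by apply/eqP => ux; rewrite ux xS in uS.
  rewrite /h (negbTE ux) (negbTE uS) eqxx /=.
  by apply: leq_trans (Hbel2 u uB uy) _; apply: leq_trans Hy1 _; rewrite ?leq_addr.
set Y' := x |: (A :|: (B :\ y)).
have Y'X : Y' \subset X.
  apply/subsetP => u; rewrite /Y' in_setU1 in_setU.
  case/orP=> [/eqP->//|/orP[/(subsetP AX)//|/Bym[uB _]]].
  exact: (subsetP BX).
have yY' : y \notin Y'.
  apply/negP; rewrite /Y' in_setU1 in_setU (negbTE yx) /= => /orP[yA|].
    by move: yA; rewrite inA (negbTE yS) !andbF.
  by rewrite !inE eqxx.
have cY' : #|Y'| < #|X|.
  by apply: proper_card; apply/properP; split => //; exists y.
have [h' [h'g h'a h's]] := IHs _ h cY' gY'.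
have spY' : spanX Y' h <= K + 2 ^ j.
  apply: spanX_le => u; rewrite /Y' in_setU1 => /orP[/eqP->|].
    by rewrite /h eqxx.
  rewrite in_setU => /orP[uA|uB'].
    have [ux _ uS] : [/\ u != x, u \in X & u \in S] by move: uA; rewrite inA => /and3P.
    rewrite /h (negbTE ux) uS /=.
    by apply: (leq_trans (le_spanX gA uA)); rewrite EP //; apply: leq_trans PK (leq_addr _ _).
  have [uB uy] := Bym _ uB'.
  have [uS uX] : u \notin S /\ u \in X by move: uB; rewrite inB => /andP.
  have ux : u != x by apply/eqP => ux; rewrite ux xS in uS.
  rewrite /h (negbTE ux) (negbTE uS) /=.
  by apply: leq_trans (Hbel2 u uB uy) _; apply: leq_trans Hy1 _; rewrite ?leq_addr.
pose g := fun u => if u == y then (K + 2 ^ j, M + 2 ^ j) else h' u.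
have EX : y |: Y' = X.
  apply/eqP; rewrite eqEsubset; apply/andP; split.
    by apply/subsetP => u; rewrite in_setU1 => /orP[/eqP->//|/(subsetP Y'X)].
  apply/subsetP => u uX; rewrite /Y' in_setU1 in_setU1 in_setU.
  case: (eqVneq u y) => //= uy; case: (eqVneq u x) => //= ux.
  case: (boolP (u \in S)) => uS.
    by rewrite inA ux uX uS.
  by rewrite in_setD1 uy inB uS uX orbT.
have gX : good e w (y |: Y') g.
  apply: add_top => //.
  - apply: (good_ext _ h'g) => u uY; rewrite /g; case: eqP => // uy.
    by rewrite -uy uY in yY'.
  - by rewrite /g eqxx /=; apply: A4.
  - by rewrite /g eqxx /ilen /=; apply: A5.
  move=> u uY; rewrite /g eqxx /=.
  have uy : u != y by apply/eqP => uy; rewrite -uy uY in yY'.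
  rewrite (negbTE uy).
  exact: (leq_trans (le_spanX _ uY) (leq_trans h's spY')).
exists g; split.
- by rewrite -EX.
- move=> u uX; rewrite /g; case: (eqVneq u y) => [->|uy].
    rewrite /=; apply/andP; split; apply: dvdn_add => //.
    by rewrite /K dvdn_sub.
  apply: h'a; move: uX; rewrite -EX in_setU1 => /orP[/eqP uy'|//].
  by rewrite uy' eqxx in uy.
- apply: spanX_le => u uX; rewrite /g; case: (eqVneq u y) => [_|uy] /=.
    rewrite Hsx; apply: leq_trans Hlen; rewrite -wxj leq_add2r //.
  have uY : u \in Y'.
    by move: uX; rewrite -EX in_setU1 => /orP[/eqP uy'|//]; rewrite uy' eqxx in uy.
  apply: leq_trans (le_spanX _ uY) _; apply: leq_trans h's _.
  apply: leq_trans spY' _; rewrite Hsx; apply: leq_trans Hlen.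
  by rewrite -wxj leq_add2r; apply: leq_trans KM HM.
Qed.


Lemma exists_strategy (V : finType) (e : rel V) (w : V -> nat) :
  exists f, ext_strategy e w f.
Proof.
pose W := (\max_(u : V) w u).+1.
exists (fun u => (enum_rank u * W, enum_rank u * W + W)).
split; [| split].
- by move=> u /=; rewrite -{1}(addn0 (_ * W)) ltn_add2l.
- move=> u; rewrite /ilen /= addKn; apply: leqW.
  exact: (@leq_bigmax_cond _ predT (fun u => w u) u).
- move=> v1 v2 ne.
  have ne' : (enum_rank v1 : nat) != enum_rank v2.
    by apply: contra ne => /eqP /val_inj /enum_rank_inj ->.
  case: (ltngtP (enum_rank v1) (enum_rank v2)) => h.
  + have le : (enum_rank v1 * W, enum_rank v1 * W + W).2 <=
              (enum_rank v2 * W, enum_rank v2 * W + W).1.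
      by rewrite /= -mulSnr leq_mul2r h orbT.
    have [/negP H _] := nomeet le.
    by move=> me; exfalso; apply: H.
  + have le : (enum_rank v2 * W, enum_rank v2 * W + W).2 <=
              (enum_rank v1 * W, enum_rank v1 * W + W).1.
      by rewrite /= -mulSnr leq_mul2r h orbT.
    have [_ /negP H] := nomeet le.
    by move=> me; exfalso; apply: H.
  + by rewrite h eqxx in ne'.
Qed.

Lemma exists_opt (V : finType) (e : rel V) (w : V -> nat) :
  exists f, optimal_ext_strategy e w f.
Proof.
have [f0 H0] := exists_strategy e w.
suff H : forall n f, ext_strategy e w f -> span f <= n ->
    exists f, optimal_ext_strategy e w f by apply: (H _ f0 H0 (leqnn _)).
elim=> [|n IH] f Hf Hn;
  case: (classic (exists g, ext_strategy e w g /\ span g < span f)) => [[g [Hg lt]]|Hno].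
- by move: (leq_trans lt Hn).
- exists f; split => // g Hg; rewrite leqNgt; apply/negP => lt; apply: Hno.
  by exists g.
- by apply: (IH g Hg); rewrite -ltnS (leq_trans lt Hn).
- exists f; split => // g Hg; rewrite leqNgt; apply/negP => lt; apply: Hno.
  by exists g.
Qed.

Theorem mainTheorem17 (V : finType) (e : rel V) (w : V -> nat) :
  is_tree e -> down_monotonic e w -> rounded w ->
  exists f : V -> nat * nat, optimal_ext_strategy e w f /\ aligned w f.
Proof.
move=> Ht [r Hdm] Hr.
have [f [Hf Hopt]] := exists_opt e w.
have Hg : good e w setT f.
  have [A1 [A2 A3]] := Hf.
  split => [u _|v1 v2 _ _ ne me]; first by split.
  have [v3 [p3 l3]] := A3 v1 v2 ne me.
  by exists v3; split => //; right.
have [g [gg ga gs]] := claim Ht Hdm Hr (leqnn _) Hg.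
have sp h : spanX setT h = span h.
  by rewrite /spanX /span; apply: eq_bigl => u; rewrite in_setT.
have [G1 G2] := gg.
exists g; split; [split|].
- split; [|split].
  + by move=> u; have [] := G1 u (in_setT u).
  + by move=> u; have [] := G1 u (in_setT u).
  + move=> v1 v2 ne me.
    have [v3 [p3 [n3|l3]]] := G2 v1 v2 (in_setT _) (in_setT _) ne me.
      by rewrite in_setT in n3.
    by exists v3.
- move=> h Hh; rewrite -sp; apply: (leq_trans gs); rewrite sp; exact: Hopt.
- by move=> u; apply: ga; rewrite in_setT.
Qed.
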